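(* Let $A$ be a finite set, $n\in\mathbb N$, $\mu\in\Pr(A^n)$ and $r>0$. Then there exists $S\subseteq[n]$ with $|S|\ge(1-r)n$ such that $\mathrm{DTC}(\mu_S)\le r^{-1}\mathrm{TC}(\mu)$.
   Context: $[n]=\{1,\dots,n\}$; $\mu_S$ is the projection (marginal) of $\mu$ on $A^S$. For a tuple $\xi=(\xi_i)_{i\in I}$ of random variables with joint law $\nu$, $\mathrm{TC}(\nu)=\sum_{i\in I}\mathrm H(\xi_i)-\mathrm H(\xi)$ (total correlation) and $\mathrm{DTC}(\nu)=\mathrm H(\xi)-\sum_{i\in I}\mathrm H(\xi_i\,|\,\xi_{I\setminus\{i\}})$ (dual total correlation), with Shannon entropy. *)

(* Defs.v *)
From mathcomp Require Import all_boot all_order all_algebra.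
From mathcomp Require Import reals exp.
Set Implicit Arguments. Unset Strict Implicit. Unset Printing Implicit Defensive.
Import Order.TTheory GRing.Theory Num.Theory.
Local Open Scope ring_scope.

Section Info.
Variable R : realType.

Definition is_pmf (T : finType) (p : T -> R) : Prop :=
  (forall t, 0 <= p t) /\ \sum_(t : T) p t = 1.

Definition pushforward (T U : finType) (p : T -> R) (f : T -> U) : U -> R :=
  fun u => \sum_(t : T | f t == u) p t.

(* Shannon entropy (natural logarithm; ln 0 = 0 so 0 ln 0 = 0) *)
Definition entropy (T : finType) (p : T -> R) : R :=
  - \sum_(t : T) p t * ln (p t).

Definition cond_entropy (T U V : finType) (p : T -> R) (X : T -> U) (Y : T -> V) : R :=
  let pXY := pushforward p (fun t => (X t, Y t)) in
  let pY := pushforward p Y in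
  - \sum_(u : U) \sum_(v : V) pXY (u, v) * ln (pXY (u, v) / pY v).

Definition restr (I A : finType) (P : pred I) (x : {ffun I -> A})
  : {ffun {j : I | P j} -> A} := [ffun j => x (val j)].

Definition coord (I A : finType) (i : I) (x : {ffun I -> A}) : A := x i.

Definition TC (I A : finType) (nu : {ffun I -> A} -> R) : R :=
  \sum_(i : I) entropy (pushforward nu (coord i)) - entropy nu.

Definition DTC (I A : finType) (nu : {ffun I -> A} -> R) : R :=
  entropy nu
  - \sum_(i : I) cond_entropy nu (coord i) (restr (fun j => j != i)).

Definition marginal (n : nat) (A : finType) (mu : {ffun 'I_n -> A} -> R)
  (S : {set 'I_n}) : {ffun {j : 'I_n | j \in S} -> A} -> R :=
  pushforward mu (restr (fun j => j \in S)).

End Info.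
Arguments marginal {R n A} mu S.

(* Main.v *)
Require Import Defs.
From mathcomp Require Import all_boot all_order all_algebra.
From mathcomp Require Import reals exp.
From mathcomp Require Import ring lra.
Set Implicit Arguments. Unset Strict Implicit. Unset Printing Implicit Defensive.
Import Order.TTheory GRing.Theory Num.Theory.
Local Open Scope ring_scope.

Section Gen.
Variable R : realType.

Definition Hf (T U : finType) (p : T -> R) (f : T -> U) : R :=
  - \sum_t p t * ln (pushforward p f (f t)).

Lemma sum_push (T U : finType) (p : T -> R) (f : T -> U) (G : U -> R) :
  \sum_u pushforward p f u * G u = \sum_t p t * G (f t).
Proof.
rewrite /pushforward.
under eq_bigr do rewrite mulr_suml big_mkcond.
rewrite exchange_big /=; apply: eq_bigr => t _.
rewrite -big_mkcond /=.
by rewrite (big_pred1 (f t)) // => u; rewrite /= eq_sym.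
Qed.

Lemma sum_push_pred (T U : finType) (p : T -> R) (f : T -> U) (P : pred U) :
  \sum_(u | P u) pushforward p f u = \sum_(t | P (f t)) p t.
Proof.
rewrite big_mkcond [RHS]big_mkcond /=.
transitivity (\sum_u pushforward p f u * (P u)%:R).
  by apply: eq_bigr => u _; case: (P u); rewrite ?mulr1 ?mulr0.
rewrite sum_push; apply: eq_bigr => t _.
by case: (P (f t)); rewrite ?mulr1 ?mulr0.
Qed.

Lemma entropy_push (T U : finType) (p : T -> R) (f : T -> U) :
  entropy (pushforward p f) = Hf p f.
Proof. by rewrite /entropy /Hf sum_push. Qed.

Lemma Hf_ext (T U V : finType) (p : T -> R) (f : T -> U) (g : T -> V) :
  (forall t t', (f t' == f t) = (g t' == g t)) -> Hf p f = Hf p g.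
Proof.
move=> H; rewrite /Hf /pushforward; congr (- _); apply: eq_bigr => t _.
by congr (_ * ln _); apply: eq_bigl => t'; rewrite H.
Qed.

Lemma Hf_push (T U V : finType) (p : T -> R) (g : T -> U) (f : U -> V) :
  Hf (pushforward p g) f = Hf p (fun t => f (g t)).
Proof.
rewrite /Hf; congr (- _).
rewrite (sum_push p g (fun u => ln (pushforward (pushforward p g) f (f u)))).
apply: eq_bigr => t _; congr (_ * ln _).
rewrite /pushforward -/(pushforward p g).
by rewrite (sum_push_pred p g (fun u => f u == f (g t))).
Qed.


Lemma push_ge0 (T U : finType) (p : T -> R) (f : T -> U) u :
  (forall t, 0 <= p t) -> 0 <= pushforward p f u.
Proof. by move=> p0; rewrite /pushforward sumr_ge0. Qed.

Lemma push_ge (T U : finType) (p : T -> R) (f : T -> U) t :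
  (forall t, 0 <= p t) -> p t <= pushforward p f (f t).
Proof.
move=> p0; rewrite /pushforward (bigD1 t) //= lerDl sumr_ge0 //.
Qed.

Lemma cond_entropyE (T U V : finType) (p : T -> R) (X : T -> U) (Y : T -> V) :
  (forall t, 0 <= p t) ->
  cond_entropy p X Y = Hf p (fun t => (X t, Y t)) - Hf p Y.
Proof.
move=> p0; rewrite /cond_entropy /= pair_bigA /=.
set pXY := pushforward p _.
set pY := pushforward p Y.
rewrite (eq_bigr (fun w => pXY w * ln (pXY w / pY w.2))); last by case.
rewrite sum_push /Hf opprK [RHS]addrC -opprB -sumrB; congr (- _); apply: eq_bigr => t _.
have [pt0|ptpos] := eqVneq (p t) 0; first by rewrite pt0 !mul0r subr0.
have ptp : 0 < p t by rewrite lt_def ptpos p0.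
have h1 : 0 < pXY (X t, Y t) by apply: lt_le_trans ptp (push_ge _ _ p0).
have h2 : 0 < pY (Y t) by apply: lt_le_trans ptp (push_ge _ _ p0).
by rewrite /= ln_div ?posrE // mulrBr.
Qed.

Lemma ln_le_sub1 (x : R) : 0 < x -> ln x <= x - 1.
Proof.
move=> x0; have e : 1 + (x - 1) = x by ring.
have := @le_ln1Dx R (x - 1); rewrite e; apply; lra.
Qed.

Lemma mulVf_le1 (x : R) : x * x^-1 <= 1.
Proof.
by have [->|x0] := eqVneq x 0; rewrite ?mul0r ?ler01 // mulfV.
Qed.

Lemma sum_pmf (T U : finType) (p : T -> R) (f : T -> U) :
  \sum_u pushforward p f u = \sum_t p t.
Proof. by rewrite (sum_push_pred p f predT). Qed.

Lemma Hf_submod (T U V W : finType) (p : T -> R) (f : T -> U) (g : T -> V)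
    (phi : U -> W) (psi : V -> W) :
  (forall t, 0 <= p t) -> \sum_t p t = 1 ->
  (forall t, phi (f t) = psi (g t)) ->
  Hf p (fun t => (f t, g t)) + Hf p (fun t => phi (f t)) <= Hf p f + Hf p g.
Proof.
move=> p0 p1 hfg.
set r1 := pushforward p f; set r2 := pushforward p g.
set r := pushforward p (fun t => (f t, g t)).
set s := pushforward p (fun t => phi (f t)).
pose G (w : U * V) := r1 w.1 * r2 w.2 / (r w * s (phi w.1)).
have stepA : \sum_t p t * G (f t, g t) <= 1.
  rewrite -(sum_push p (fun t => (f t, g t)) G) -/r.
  rewrite -(pair_bigA _ (fun u v => r (u, v) * G (u, v))) /=.
  apply: (@le_trans _ _ (\sum_u \sum_v (r1 u * r2 v / s (phi u) * (phi u == psi v)%:R))).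
    apply: ler_sum => u _; apply: ler_sum => v _.
    rewrite /G /=.
    have e : r (u, v) * (r1 u * r2 v / (r (u, v) * s (phi u))) =
             r1 u * r2 v / s (phi u) * (r (u, v) * (r (u, v))^-1).
      by rewrite invfM; ring.
    rewrite e; have [huv|huv] := eqVneq (phi u) (psi v).
      rewrite mulr1 ler_piMr ?mulVf_le1 //.
      by rewrite mulr_ge0 ?invr_ge0 ?mulr_ge0 ?push_ge0.
    have -> : r (u, v) = 0.
      rewrite /r /pushforward big1 // => t /eqP [hu hv].
      by move: huv; rewrite -hu -hv hfg eqxx.
    by rewrite mul0r mulr0.
  apply: (@le_trans _ _ (\sum_u r1 u)); last by rewrite sum_pmf p1.
  apply: ler_sum => u _.
  rewrite (eq_bigr (fun v => r1 u / s (phi u) * (r2 v * (psi v == phi u)%:R))); last first.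
    by move=> v _; rewrite eq_sym; ring.
  rewrite -mulr_sumr.
  have -> : \sum_v r2 v * (psi v == phi u)%:R = s (phi u).
    rewrite (_ : \sum_v _ = \sum_(v | psi v == phi u) r2 v); last first.
      by rewrite [RHS]big_mkcond; apply: eq_bigr => v _; case: eqP; rewrite ?mulr1 ?mulr0.
    rewrite (sum_push_pred p g (fun v => psi v == phi u)) /s /pushforward.
    by apply: eq_bigl => t; rewrite hfg.
  by rewrite -mulrA [_^-1 * _]mulrC ler_piMr ?mulVf_le1 ?push_ge0.
have stepB : forall t, p t * (ln (r1 (f t)) + ln (r2 (g t)) - ln (r (f t, g t))
                 - ln (s (phi (f t)))) <= p t * (G (f t, g t) - 1).
  move=> t; have [pt0|ptpos] := eqVneq (p t) 0; first by rewrite pt0 !mul0r.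
  have ptp : 0 < p t by rewrite lt_def ptpos p0.
  have h1 : 0 < r1 (f t) by apply: lt_le_trans ptp (push_ge _ _ p0).
  have h2 : 0 < r2 (g t) by apply: lt_le_trans ptp (push_ge _ _ p0).
  have h3 : 0 < r (f t, g t) by apply: lt_le_trans ptp (push_ge _ _ p0).
  have h4 : 0 < s (phi (f t)) by apply: lt_le_trans ptp (push_ge _ _ p0).
  rewrite ler_wpM2l ?p0 //.
  have -> : ln (r1 (f t)) + ln (r2 (g t)) - ln (r (f t, g t)) - ln (s (phi (f t)))
          = ln (G (f t, g t)).
    rewrite /G /= ln_div ?posrE ?mulr_gt0 // !lnM ?posrE //; ring.
  by apply: ln_le_sub1; rewrite /G /= divr_gt0 ?mulr_gt0.
have key : \sum_t p t * (ln (r1 (f t)) + ln (r2 (g t)) - ln (r (f t, g t))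
                 - ln (s (phi (f t)))) <= \sum_t p t * (G (f t, g t) - 1).
  by apply: ler_sum => t _; exact: stepB.
rewrite [X in _ <= X](eq_bigr (fun t => p t * G (f t, g t) - p t)) in key; last first.
  by move=> t _; ring.
rewrite sumrB p1 in key.
have key2 : \sum_t p t * (ln (r1 (f t)) + ln (r2 (g t)) - ln (r (f t, g t))
                 - ln (s (phi (f t)))) <= 0 by lra.
rewrite (eq_bigr (fun t => p t * ln (r1 (f t)) + p t * ln (r2 (g t))
   - p t * ln (r (f t, g t)) - p t * ln (s (phi (f t))))) in key2; last first.
  by move=> t _; ring.
rewrite !sumrB big_split /= in key2.
rewrite /Hf -/r1 -/r2 -/r -/s; lra.
Qed.

Lemma Hf_mono (T U V : finType) (p : T -> R) (f : T -> U) (phi : U -> V) :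
  (forall t, 0 <= p t) ->
  Hf p (fun t => phi (f t)) <= Hf p f.
Proof.
move=> p0; rewrite /Hf lerN2; apply: ler_sum => t _.
have [pt0|ptpos] := eqVneq (p t) 0; first by rewrite pt0 !mul0r.
have ptp : 0 < p t by rewrite lt_def ptpos p0.
have h1 : 0 < pushforward p f (f t) by apply: lt_le_trans ptp (push_ge _ _ p0).
rewrite ler_wpM2l ?p0 // ler_ln ?posrE //; last first.
  by apply: lt_le_trans ptp (push_ge _ _ p0).
rewrite /pushforward [X in X <= _]big_mkcond [X in _ <= X]big_mkcond /=.
apply: ler_sum => t' _; case: eqP => [->|_]; rewrite ?eqxx //.
by case: ifP.
Qed.
End Gen.

Section Sets.
Variable R : realType.
Variables (n : nat) (A : finType) (mu : {ffun 'I_n -> A} -> R).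
Hypothesis p0 : forall x, 0 <= mu x.
Hypothesis p1 : \sum_x mu x = 1.

Definition proj (S : {set 'I_n}) (x : {ffun 'I_n -> A}) : {ffun 'I_n -> option A} :=
  [ffun j => if j \in S then Some (x j) else None].

Definition H (S : {set 'I_n}) : R := Hf mu (proj S).

Definition agree (S : {set 'I_n}) (x y : {ffun 'I_n -> A}) :=
  [forall j in S, y j == x j].

Lemma proj_eq S x y : (proj S y == proj S x) = agree S x y.
Proof.
apply/eqP/forallP => [h j | h].
  apply/implyP => jS; move/ffunP: h => /(_ j); rewrite !ffunE jS.
  by case=> ->.
apply/ffunP => j; rewrite !ffunE; case: ifP => // jS.
by move: (h j); rewrite jS => /eqP ->.
Qed.

Lemma H_ext (U : finType) (f : {ffun 'I_n -> A} -> U) S :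
  (forall x y, (f y == f x) = agree S x y) -> Hf mu f = H S.
Proof. by move=> h; apply: Hf_ext => x y; rewrite h proj_eq. Qed.

Lemma restr_eqE (I B : finType) (P : pred I) (x y : {ffun I -> B}) :
  (restr P y == restr P x) = [forall j, P j ==> (y j == x j)].
Proof.
apply/eqP/forallP => [h j | h].
  apply/implyP => Pj; move/ffunP: h => /(_ (exist _ j Pj)).
  by rewrite !ffunE /= => ->.
apply/ffunP => k; rewrite !ffunE; apply/eqP.
by move: (h (val k)); rewrite (valP k).
Qed.

Lemma H0 : H set0 = 0.
Proof.
rewrite -(H_ext (f := fun _ => tt)); last first.
  by move=> x y; rewrite eqxx; apply/esym/forallP => j; rewrite inE.
rewrite /Hf /pushforward.
under eq_bigr do rewrite (eq_bigl predT) // p1 ln1 mulr0.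
by rewrite big1 // oppr0.
Qed.

Lemma H_submod S T : H (S :|: T) + H (S :&: T) <= H S + H T.
Proof.
pose phi (u : {ffun 'I_n -> option A}) := [ffun j => if j \in T then u j else None].
pose psi (u : {ffun 'I_n -> option A}) := [ffun j => if j \in S then u j else None].
have e1 : forall x, phi (proj S x) = proj (S :&: T) x.
  by move=> x; apply/ffunP => j; rewrite !ffunE inE; case: (j \in T); case: (j \in S).
have e2 : forall x, psi (proj T x) = proj (S :&: T) x.
  by move=> x; apply/ffunP => j; rewrite !ffunE inE; case: (j \in T); case: (j \in S).
have := @Hf_submod R _ _ _ _ mu (proj S) (proj T) phi psi p0 p1.
rewrite -/(H S) -/(H T).
rewrite (H_ext (f := fun t => phi (proj S t)) (S := S :&: T)); last by move=> x y; rewrite /= !e1 proj_eq.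
rewrite (H_ext (S := S :|: T)); last first.
  move=> x y; rewrite xpair_eqE !proj_eq; apply/andP/forallP => [[/forallP h1 /forallP h2] j|h].
    apply/implyP; rewrite inE => /orP [jS|jT]; [by move: (h1 j); rewrite jS | by move: (h2 j); rewrite jT].
  split; apply/forallP => j; apply/implyP => jX; move: (h j); rewrite inE jX ?orbT //=.
by apply => x; rewrite e1 e2.
Qed.

Lemma H_mono (S T : {set 'I_n}) : S \subset T -> H S <= H T.
Proof.
move=> sST.
pose phi (u : {ffun 'I_n -> option A}) := [ffun j => if j \in S then u j else None].
have := @Hf_mono R _ _ _ mu (proj T) phi p0.
rewrite (H_ext (S := S)) //.
move=> x y; rewrite -proj_eq; congr (_ == _); apply/ffunP => j; rewrite !ffunE;
  by case: ifP => // jS; rewrite (subsetP sST j jS).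
Qed.


Definition MI (i : 'I_n) (S : {set 'I_n}) := H [set i] + H (S :\ i) - H S.
Definition TCs (S : {set 'I_n}) := \sum_(i in S) H [set i] - H S.
Definition DTCs (S : {set 'I_n}) := H S - \sum_(i in S) (H S - H (S :\ i)).

Lemma MI_ge0 (i : 'I_n) (S : {set 'I_n}) : i \in S -> 0 <= MI i S.
Proof.
move=> iS; have := H_submod (S :\ i) [set i].
rewrite setUC setD1K // (_ : (S :\ i) :&: [set i] = set0); last first.
  by apply/setP => j; rewrite !inE; case: (j == i); rewrite ?andbF.
rewrite H0 /MI; lra.
Qed.

Lemma TC_step (j : 'I_n) (S : {set 'I_n}) : j \in S -> TCs S = TCs (S :\ j) + MI j S.
Proof.
move=> jS; rewrite /TCs /MI (bigD1 j) //=.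
rewrite (eq_bigl (fun i => i \in S :\ j)); last by move=> i; rewrite !inE andbC.
lra.
Qed.

Lemma TC_ge0 (S : {set 'I_n}) : 0 <= TCs S.
Proof.
move: {2}#|S| (erefl #|S|) => k; elim: k S => [|k IH] S hS.
  move/eqP: hS; rewrite cards_eq0 => /eqP ->.
  by rewrite /TCs big_set0 H0 subrr.
have [j jS] : exists j, j \in S.
  by apply/set0Pn; rewrite -card_gt0 hS.
rewrite (TC_step jS); apply: addr_ge0; last exact: MI_ge0.
by apply: IH; move: hS; rewrite (cardsD1 j) jS => -[].
Qed.

Lemma DTC_le (S : {set 'I_n}) : DTCs S <= \sum_(i in S) MI i S.
Proof.
have := TC_ge0 S; rewrite /TCs => hT.
rewrite /DTCs /MI.
rewrite [X in _ <= X](eq_bigr (fun i => H [set i] - (H S - H (S :\ i)))); last by move=> i _; ring.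
rewrite [X in _ <= X]sumrB; lra.
Qed.

Lemma DTCs0 : DTCs set0 = 0.
Proof. by rewrite /DTCs big_set0 H0 subrr. Qed.

Lemma main_ind d : forall S : {set 'I_n}, exists S' : {set 'I_n},
  (#|S| <= #|S'| + d)%N /\ (d.+1)%:R * DTCs S' <= #|S|%:R * TCs S.
Proof.
elim: d => [|d IH] S.
- have [->|] := eqVneq S set0.
    by exists set0; rewrite DTCs0 cards0 !mul0r mulr0.
  move=> /set0Pn [i0 i0S].
  case: (@arg_maxP _ _ _ i0 (mem S) (fun i => MI i S) i0S) => j jS hmax.
  exists S; split; first by rewrite addn0.
  have hD : DTCs S <= #|S|%:R * MI j S.
    apply: le_trans (DTC_le S) _.
    rewrite mulr_natl -sumr_const; apply: ler_sum => i iS.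
    exact: hmax.
  have := TC_ge0 (S :\ j); rewrite (TC_step jS) => _.
  have hT := TC_step jS; have hT0 := TC_ge0 (S :\ j).
  have k0 : 0 <= #|S|%:R :> R by rewrite ler0n.
  rewrite mul1r; apply: le_trans hD _; rewrite ler_wpM2l //; lra.
- have [->|] := eqVneq S set0.
    by exists set0; rewrite DTCs0 cards0 !mul0r mulr0.
  move=> /set0Pn [i0 i0S].
  case: (@arg_maxP _ _ _ i0 (mem S) (fun i => MI i S) i0S) => j jS hmax.
  have hD : DTCs S <= #|S|%:R * MI j S.
    apply: le_trans (DTC_le S) _.
    rewrite mulr_natl -sumr_const; apply: ler_sum => i iS.
    exact: hmax.
  have hT := TC_step jS; have hT0 := TC_ge0 (S :\ j).
  have k0 : 0 <= #|S|%:R :> R by rewrite ler0n.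
  set m := MI j S in hD hT.
  have [hm|hm] := leP ((d.+2)%:R * m) (TCs S).
    exists S; split; first by rewrite leq_addr.
    have d0 : 0 <= (d.+2)%:R :> R by rewrite ler0n.
    nra.
  have [S' [hc hD']] := IH (S :\ j).
  exists S'; split.
    have jS' : j \in S by [].
    by move: hc; rewrite (cardsD1 j S) jS' addnS addSn.
  have hk : #|S|%:R = 1 + #|S :\ j|%:R :> R by rewrite (cardsD1 j S) (_ : j \in S) // natrD.
  have k1 : 0 <= #|S :\ j|%:R :> R by rewrite ler0n.
  rewrite hk; rewrite hk in k0.
  move: hD' hm; set D := DTCs S'; set k := #|S :\ j|%:R; set T' := TCs (S :\ j).
  rewrite hT -/T' => hD' hm.
  have e2 : (d.+2)%:R = (d.+1)%:R + 1 :> R by rewrite -natr1.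
  rewrite e2 in hm *.
  set e := (d.+1)%:R in hD' hm *.
  have e0 : 0 < e by rewrite ltr0n.
  have hm0 : 0 <= m by apply: MI_ge0.
  have hT0' : 0 <= T' := hT0.
  have k1' : 0 <= k := k1.
  have h1 : (e + 1) * (k * T') <= k * (e * (T' + m)).
    have : (e + 1) * T' <= e * (T' + m) by nra.
    move=> h; nra.
  have h2 : e * ((e + 1) * D) <= e * ((1 + k) * (T' + m)).
    have : (e + 1) * (e * D) <= (e + 1) * (k * T') by rewrite ler_wpM2l //; lra.
    have : 0 <= e * (T' + m) by apply: mulr_ge0; lra.
    lra.
  by rewrite ler_pM2l in h2.
Qed.


Lemma marg_ge0 (S : {set 'I_n}) u : 0 <= marginal mu S u.
Proof. exact: push_ge0. Qed.

Lemma entropy_marg (S : {set 'I_n}) : entropy (marginal mu S) = H S.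
Proof.
rewrite /marginal entropy_push; apply: H_ext => x y.
by rewrite restr_eqE.
Qed.

Lemma cond_marg (S : {set 'I_n}) (i : {j : 'I_n | j \in S}) :
  cond_entropy (marginal mu S) (Defs.coord i) (restr (fun k => k != i))
  = H S - H (S :\ val i).
Proof.
rewrite cond_entropyE; last exact: marg_ge0.
rewrite /marginal !Hf_push; congr (_ - _); apply: H_ext => x y.
  rewrite xpair_eqE restr_eqE /Defs.coord ffunE [in X in (_ == X)]ffunE.
  apply/idP/idP.
    case/andP => hi /forallP hk; apply/forallP => j; apply/implyP => jS.
    have [->|ne] := eqVneq j (val i); first exact: hi.
    move: (hk (exist _ j jS)); rewrite !ffunE /=.
    have -> : exist (fun j => j \in S) j jS != i.
      by apply/eqP => h; move: ne; rewrite -h /= eqxx.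
    by [].
  move/forallP => h; apply/andP; split.
    by move: (h (val i)); rewrite (valP i).
  apply/forallP => k; apply/implyP => _; rewrite !ffunE.
  by move: (h (val k)); rewrite (valP k).
rewrite restr_eqE; apply/idP/idP.
  move/forallP => hk; apply/forallP => j; apply/implyP; rewrite !inE => /andP [ne jS].
  move: (hk (exist _ j jS)); rewrite !ffunE /=.
  have -> : exist (fun j => j \in S) j jS != i.
    by apply/eqP => h; move: ne; rewrite -h /= eqxx.
  by [].
move/forallP => h; apply/forallP => k; apply/implyP => ki; rewrite !ffunE.
move: (h (val k)); rewrite !inE (valP k) andbT.
have -> : val k != val i by apply: contra ki => /eqP/val_inj ->.
by [].
Qed.

Lemma DTC_marg (S : {set 'I_n}) : DTC (marginal mu S) = DTCs S.
Proof.
rewrite /DTC /DTCs entropy_marg; congr (_ - _).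
rewrite (big_sub S (fun j => H S - H (S :\ j))).
by apply: eq_bigr => i _; rewrite cond_marg.
Qed.

Lemma TC_all : TC mu = TCs setT.
Proof.
rewrite /TC /TCs.
rewrite (_ : \sum_(i in [set: 'I_n]) H [set i] = \sum_i H [set i]); last first.
  by apply: eq_bigl => i; rewrite inE.
congr (_ - _).
  apply: eq_bigr => i _; rewrite entropy_push; apply: H_ext => x y.
  rewrite /Defs.coord; apply/eqP/forallP => [e j|h].
    by rewrite inE; apply/implyP => /eqP ->; rewrite e.
  by move: (h i); rewrite inE eqxx => /eqP.
rewrite -(H_ext (f := fun x => x)); last first.
  move=> x y; apply/eqP/forallP => [-> j|h]; first by apply/implyP.
  by apply/ffunP => j; move: (h j); rewrite inE => /eqP.
rewrite /entropy /Hf /pushforward; congr (- _); apply: eq_bigr => x _.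
by rewrite big_pred1_eq.
Qed.

End Sets.

Theorem lemma3p7 (R : realType) (A : finType) (n : nat)
  (mu : {ffun 'I_n -> A} -> R) (r : R) :
  is_pmf mu -> 0 < r ->
  exists S : {set 'I_n},
    (1 - r) * n%:R <= #|S|%:R /\
    DTC (marginal mu S) <= r^-1 * TC mu.
Proof.
move=> [p0 p1] r0.
have n0 : 0 <= n%:R :> R by rewrite ler0n.
have T0 : 0 <= TC mu by rewrite (TC_all mu); exact: TC_ge0.
have [hr|hr] := lerP 1 r.
  exists set0; split; first by rewrite cards0; nra.
  rewrite (DTC_marg p0) (DTCs0 p1); apply: mulr_ge0 => //.
  by rewrite invr_ge0 ltW.
have rn0 : 0 <= r * n%:R by apply: mulr_ge0 => //; exact: ltW.
have /andP [hd1 hd2] := truncn_itv rn0.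
set d := Num.truncn (r * n%:R) in hd1 hd2.
have [S' [hc hD]] := main_ind p0 p1 d setT.
exists S'; rewrite cardsT card_ord in hc hD; split.
  have : n%:R <= #|S'|%:R + d%:R :> R by rewrite -natrD ler_nat.
  lra.
rewrite (DTC_marg p0) (TC_all mu).
rewrite -(ler_pM2l r0) mulrA mulrV ?unitf_gt0 // mul1r.
have := TC_ge0 p0 p1 setT.
move: hD hd2; set D := DTCs _ _; set T := TCs _ _.
rewrite -natr1 => hD hd2 hT.
have [D0|D0] := lerP D 0; first nra.
nra.
Qed.
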